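(* Let $G$ be a graph. Then $\mathrm{diam}(G)\le 3$ if and only if every independent set of $G$ is a general position set of $G$.
   Context: All graphs are finite, simple and connected; $\mathrm{diam}(G)$ is the maximum distance between two vertices. A set $S$ of vertices is a general position set if no three vertices of $S$ lie on a common geodesic (shortest path) of $G$. *)

(* Defs.v *)
From mathcomp Require Import all_boot.
Set Implicit Arguments. Unset Strict Implicit. Unset Printing Implicit Defensive.

Definition simple_graph (T : finType) (e : rel T) : Prop :=
  symmetric e /\ irreflexive e.

(* A walk from x to y of length n: a sequence p with x :: p an e-path
   ending in y, and size p = n. *)
Definition walk (T : finType) (e : rel T) (x y : T) (p : seq T) : bool :=
  path e x p && (last x p == y).

Definition connected_graph (T : finType) (e : rel T) : Prop :=
  forall x y : T, exists p, walk e x y p.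

Definition dist_le (T : finType) (e : rel T) (x y : T) (n : nat) : Prop :=
  exists p, walk e x y p /\ size p <= n.

Definition dist_eq (T : finType) (e : rel T) (x y : T) (n : nat) : Prop :=
  dist_le e x y n /\ forall m, dist_le e x y m -> n <= m.

Definition diam_le (T : finType) (e : rel T) (d : nat) : Prop :=
  forall x y : T, dist_le e x y d.

Definition geodesic (T : finType) (e : rel T) (x y : T) (p : seq T) : Prop :=
  walk e x y p /\ dist_eq e x y (size p).

Definition independent (T : finType) (e : rel T) (S : {set T}) : Prop :=
  forall u v, u \in S -> v \in S -> ~~ e u v.

Definition general_position (T : finType) (e : rel T) (S : {set T}) : Prop :=
  forall u v w, u \in S -> v \in S -> w \in S ->
    u != v -> v != w -> u != w ->
    ~ (exists x y p, geodesic e x y p /\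
         u \in x :: p /\ v \in x :: p /\ w \in x :: p).

(* Main.v *)
Require Import Defs.
From Stdlib Require Import Classical Lia.
From mathcomp Require Import all_boot.

Lemma exists_geo (T : finType) (e : rel T) x y p0 :
  walk e x y p0 ->
  exists p, walk e x y p /\ forall q, walk e x y q -> size p <= size q.
Proof.
move: {2}(size p0) (leqnn (size p0)) => n; elim: n p0 => [|n IH] p0 Hs Hw.
  exists p0; split => // q _; by move: Hs; rewrite leqn0 => /eqP ->.
case: (classic (exists q, walk e x y q /\ size q < size p0)).
  move=> [q [Hq Hlt]]; apply: (IH q) => //; rewrite -ltnS; exact: leq_trans Hlt Hs.
move=> Hno; exists p0; split => // q Hq; rewrite leqNgt; apply/negP => Hlt.
by apply: Hno; exists q.
Qed.

Theorem corollary4p3 (T : finType) (e : rel T) :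
  simple_graph e -> connected_graph e ->
  (diam_le e 3 <-> forall S : {set T}, independent e S -> general_position e S).
Proof.
move=> [Hsym Hirr] Hcon; split.
- move=> Hdiam S Hind u v w Hu Hv Hw Huv Hvw Huw [x [y [p [[Hwk [_ Hmin]] [Hux [Hvx Hwx]]]]]].
  have Hsz : size p <= 3 by apply: Hmin; exact: Hdiam.
  have Hn : forall a b, a \in S -> b \in S -> e a b = false.
    by move=> a b Ha Hb; apply/negbTE; apply: Hind.
  have E1 := Hn u v Hu Hv; have E2 := Hn v u Hv Hu; have E3 := Hn u w Hu Hw.
  have E4 := Hn w u Hw Hu; have E5 := Hn v w Hv Hw; have E6 := Hn w v Hw Hv.
  move: Hwk; rewrite /walk.
  clear Hmin.
  case: p Hsz Hux Hvx Hwx => [|a [|b [|c [|d q]]]] //= _;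
  rewrite !inE => Hux Hvx Hwx;
  [ move/eqP: Hux => ?; move/eqP: Hvx => ?; subst; by rewrite eqxx in Huv
  | ..].
  + case/orP: Hux => /eqP ?; case/orP: Hvx => /eqP ?; case/orP: Hwx => /eqP ?; subst;
    rewrite ?eqxx // in Huv Hvw Huw;
    by rewrite ?E1 ?E2 ?E3 ?E4 ?E5 ?E6 ?andbF ?andFb.
  + case/or3P: Hux => /eqP ?; case/or3P: Hvx => /eqP ?; case/or3P: Hwx => /eqP ?; subst;
    rewrite ?eqxx // in Huv Hvw Huw;
    by rewrite ?E1 ?E2 ?E3 ?E4 ?E5 ?E6 ?andbF ?andFb.
  + case/or4P: Hux => /eqP ?; case/or4P: Hvx => /eqP ?; case/or4P: Hwx => /eqP ?; subst;
    rewrite ?eqxx // in Huv Hvw Huw;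
    by rewrite ?E1 ?E2 ?E3 ?E4 ?E5 ?E6 ?andbF ?andFb.
- move=> Hgp x y; apply: NNPP => Hnd.
  have [p0 Hw0] := Hcon x y.
  have [p [Hw Hmin]] := @exists_geo _ _ _ _ _ Hw0.
  have Hsz : 3 < size p.
    rewrite ltnNge; apply/negP => Hle; apply: Hnd; by exists p.
  case: p Hw Hmin Hsz => [|a [|b [|c [|d q]]]] // Hw Hmin _.
  move: (Hw); rewrite /walk /= => /andP [/andP [Hxa /andP [Hab /andP [Hbc /andP [Hcd Hq]]]] Hl].
  have Hshort : forall r, walk e x y r -> size r < (size q).+4 -> False.
    move=> r Hr Hlt; move: (Hmin r Hr) => /=; by rewrite leqNgt Hlt.
  have Nxb : ~~ e x b.
    apply/negP => E; apply: (Hshort (b :: c :: d :: q)); last by apply/ltP; simpl; lia.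
    by rewrite /walk /= E Hbc Hcd Hq.
  have Nbd : ~~ e b d.
    apply/negP => E; apply: (Hshort (a :: b :: d :: q)); last by apply/ltP; simpl; lia.
    by rewrite /walk /= E Hxa Hab Hq.
  have Nxd : ~~ e x d.
    apply/negP => E; apply: (Hshort (d :: q)); last by apply/ltP; simpl; lia.
    by rewrite /walk /= E Hq.
  have Dxb : x != b.
    apply/negP => /eqP Eq; subst b; apply: (Hshort (c :: d :: q)); last by apply/ltP; simpl; lia.
    by rewrite /walk /= Hbc Hcd Hq.
  have Dbd : b != d.
    apply/negP => /eqP Eq; subst b; apply: (Hshort (a :: d :: q)); last by apply/ltP; simpl; lia.
    by rewrite /walk /= Hxa Hab Hq.
  have Dxd : x != d.
    apply/negP => /eqP Eq; subst d; apply: (Hshort q); last by apply/ltP; simpl; lia.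
    by rewrite /walk /= Hq.
  have HI : independent e [set x; b; d].
    move=> u v; rewrite !inE => H1 H2; case/orP: H1 => [/orP[]|] /eqP ->; case/orP: H2 => [/orP[]|] /eqP ->;
    rewrite ?Hirr // ?(Hsym b x) ?(Hsym d x) ?(Hsym d b) //.
  apply: (Hgp _ HI x b d); rewrite ?inE ?eqxx ?orbT //.
  exists x, y, [:: a, b, c, d & q]; split; last by rewrite !inE !eqxx ?orbT.
  split => //; split; first by exists [:: a, b, c, d & q].
  by move=> m [r [Hr Hrm]]; apply: leq_trans (Hmin r Hr) Hrm.
Qed.
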